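(* Let $\mathcal C$ be an immersed curve and $P_1,P_2,\dots,P_N$ distinct points on $\mathcal C$ listed in order along $\mathcal C$. Assume there are positive constants $A_0$ and $R_0$ such that (a) for all $j$ with $1\le j\le N-2$, $\frac{A_0}{2}\le\mathrm{Area}(\triangle P_jP_{j+1}P_{j+2})$; (b) for each $j$ with $1\le j\le N-2$ the points $P_j,P_{j+1},P_{j+2}$ lie on a circle of radius $\ge R_0$. Then $$N<2+\frac{\mathrm{Length}(\mathcal C)}{(A_0R_0)^{1/3}}.$$ *)

(* Defs.v *)
From Stdlib Require Import Reals.
From Coquelicot Require Import Coquelicot.
Open Scope R_scope.

Definition immersed_curve (x y x' y' : R -> R) (a b : R) : Prop :=
  a < b /\
  forall t, a <= t <= b ->
    is_derive x t (x' t) /\ is_derive y t (y' t) /\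
    continuous x' t /\ continuous y' t /\
    (x' t <> 0 \/ y' t <> 0).

Definition curve_length (x' y' : R -> R) (a b : R) : R :=
  RInt (fun t => sqrt (x' t ^ 2 + y' t ^ 2)) a b.

Definition tri_area (P Q S : R * R) : R :=
  Rabs ((fst Q - fst P) * (snd S - snd P) - (snd Q - snd P) * (fst S - fst P)) / 2.

Definition dist2 (P Q : R * R) : R :=
  sqrt ((fst P - fst Q) ^ 2 + (snd P - snd Q) ^ 2).

Definition on_circle_of_radius (P Q S : R * R) (r : R) : Prop :=
  exists c : R * R, dist2 P c = r /\ dist2 Q c = r /\ dist2 S c = r.

(* Main.v *)
Require Import Defs.
From Stdlib Require Import Reals Lra Lia.
From Coquelicot Require Import Coquelicot.
Open Scope R_scope.
From Stdlib Require Import Arith.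

Definition speed (x' y' : R -> R) t := sqrt (x' t ^ 2 + y' t ^ 2).

Lemma speed_cont x y x' y' a b : immersed_curve x y x' y' a b ->
  forall t, a <= t <= b -> continuous (speed x' y') t.
Proof.
  intros [_ H] t Ht. destruct (H t Ht) as (_ & _ & c1 & c2 & _).
  unfold speed.
  assert (q : continuous (fun z : R => z ^ 2) (x' t)) by (apply (@ex_derive_continuous R_AbsRing R_NormedModule); auto_derive; auto).
  assert (q2 : continuous (fun z : R => z ^ 2) (y' t)) by (apply (@ex_derive_continuous R_AbsRing R_NormedModule); auto_derive; auto).
  pose proof (continuous_comp x' (fun z : R => z ^ 2) t c1 q) as h1.
  pose proof (continuous_comp y' (fun z : R => z ^ 2) t c2 q2) as h2.
  pose proof (@continuous_plus R_UniformSpace R_AbsRing R_NormedModule _ _ t h1 h2) as h3.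
  apply (continuous_comp (fun t => x' t ^ 2 + y' t ^ 2) sqrt t h3).
  - apply continuity_pt_filterlim. apply continuity_pt_sqrt. nra.
Qed.

Lemma speed_ex x y x' y' a b : immersed_curve x y x' y' a b ->
  forall u v, a <= u -> u <= v -> v <= b -> ex_RInt (speed x' y') u v.
Proof.
  intros HC u v h1 h2 h3. apply (@ex_RInt_continuous R_CompleteNormedModule). intros z Hz.
  rewrite Rmin_left in Hz by lra. rewrite Rmax_right in Hz by lra.
  apply (speed_cont _ _ _ _ _ _ HC). lra.
Qed.

Lemma speed_ge0 x' y' t : 0 <= speed x' y' t.
Proof. apply sqrt_pos. Qed.

Lemma chord x y x' y' a b : immersed_curve x y x' y' a b ->
  forall u v, a <= u -> u <= v -> v <= b ->
  dist2 (x u, y u) (x v, y v) <= RInt (speed x' y') u v.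
Proof.
  intros HC u v h1 h2 h3.
  pose proof HC as [_ H].
  set (dx := x v - x u). set (dy := y v - y u).
  set (D := sqrt (dx ^ 2 + dy ^ 2)).
  assert (HD : dist2 (x u, y u) (x v, y v) = D).
  { unfold dist2, D, dx, dy; simpl. f_equal. ring. }
  rewrite HD.
  assert (Hex := speed_ex _ _ _ _ _ _ HC u v h1 h2 h3).
  assert (HI : 0 <= RInt (speed x' y') u v).
  { apply RInt_ge_0; auto. intros; apply speed_ge0. }
  assert (Hg : is_RInt (fun t => dx * x' t + dy * y' t) u v
                 (minus (dx * x v + dy * y v) (dx * x u + dy * y u))).
  { apply (is_RInt_derive (fun t => dx * x t + dy * y t)).
    - intros z Hz. rewrite Rmin_left in Hz by lra. rewrite Rmax_right in Hz by lra.
      destruct (H z ltac:(lra)) as (d1 & d2 & _).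
      exact (is_derive_plus (fun t => dx * x t) (fun t => dy * y t) z _ _
        (is_derive_scal x z dx (x' z) d1) (is_derive_scal y z dy (y' z) d2)).
    - intros z Hz. rewrite Rmin_left in Hz by lra. rewrite Rmax_right in Hz by lra.
      destruct (H z ltac:(lra)) as (_ & _ & c1 & c2 & _).
      exact (@continuous_plus R_UniformSpace R_AbsRing R_NormedModule _ _ z
        (@continuous_scal_r R_UniformSpace R_AbsRing R_NormedModule dx x' z c1)
        (@continuous_scal_r R_UniformSpace R_AbsRing R_NormedModule dy y' z c2)). }
  assert (Hv : RInt (fun t => dx * x' t + dy * y' t) u v = dx ^ 2 + dy ^ 2).
  { rewrite (is_RInt_unique _ _ _ _ Hg). unfold minus, plus, opp; simpl.
    unfold dx, dy. ring. }
  assert (Hle : RInt (fun t => dx * x' t + dy * y' t) u v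
                <= RInt (fun t => D * speed x' y' t) u v).
  { apply RInt_le; auto.
    - eexists; eauto.
    - apply (ex_RInt_scal (speed x' y') u v D); auto.
    - intros z Hz. unfold D, speed.
      pose proof (sqrt_cauchy dx dy (x' z) (y' z)). unfold Rsqr in H0.
      replace (dx ^ 2 + dy ^ 2) with (dx * dx + dy * dy) by ring.
      replace (x' z ^ 2 + y' z ^ 2) with (x' z * x' z + y' z * y' z) by ring.
      lra. }
  rewrite Hv in Hle.
  assert (E : RInt (fun t => D * speed x' y' t) u v = D * RInt (speed x' y') u v)
    by exact (RInt_scal (speed x' y') u v D Hex).
  rewrite E in Hle.
  assert (HD2 : D * D = dx ^ 2 + dy ^ 2).
  { unfold D. apply sqrt_sqrt. nra. }
  assert (0 <= D) by apply sqrt_pos.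
  destruct (Req_dec D 0) as [E0|E0]. { lra. }
  nra.
Qed.

Lemma circ_id ux uy wx wy mx my :
  2 * (mx * ux + my * uy) = ux ^ 2 + uy ^ 2 ->
  2 * (mx * wx + my * wy) = wx ^ 2 + wy ^ 2 ->
  4 * (mx ^ 2 + my ^ 2) * (ux * wy - uy * wx) ^ 2 =
  (ux ^ 2 + uy ^ 2) * (wx ^ 2 + wy ^ 2) * ((ux - wx) ^ 2 + (uy - wy) ^ 2).
Proof.
  intros h1 h2.
  assert (I : (mx ^ 2 + my ^ 2) * (ux * wy - uy * wx) ^ 2 =
     ((mx * ux + my * uy) * wx - (mx * wx + my * wy) * ux) ^ 2 +
     ((mx * ux + my * uy) * wy - (mx * wx + my * wy) * uy) ^ 2) by ring.
  replace (4 * (mx ^ 2 + my ^ 2) * (ux * wy - uy * wx) ^ 2)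
    with (4 * ((mx ^ 2 + my ^ 2) * (ux * wy - uy * wx) ^ 2)) by ring.
  rewrite I.
  replace (mx * ux + my * uy) with ((ux ^ 2 + uy ^ 2) / 2) by lra.
  replace (mx * wx + my * wy) with ((wx ^ 2 + wy ^ 2) / 2) by lra.
  field.
Qed.

Lemma tri_key P Q S r A0 R0 : 0 < A0 -> 0 < R0 -> R0 <= r ->
  on_circle_of_radius P Q S r -> A0 / 2 <= tri_area P Q S ->
  8 * (A0 * R0) <= (dist2 P Q + dist2 Q S) ^ 3.
Proof.
  destruct P as [px py], Q as [qx qy], S as [sx sy].
  intros hA hR hr [[cx cy] [e1 [e2 e3]]] har.
  unfold tri_area in har; unfold dist2 in *; cbn [fst snd] in *.
  set (ux := qx - px) in *. set (uy := qy - py) in *.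
  set (wx := sx - px) in *. set (wy := sy - py) in *.
  set (mx := cx - px). set (my := cy - py).
  assert (r0 : 0 <= r) by (rewrite <- e1; apply sqrt_pos).
  assert (s1 : r * r = (px - cx) ^ 2 + (py - cy) ^ 2).
  { rewrite <- e1. apply sqrt_sqrt. apply Rplus_le_le_0_compat; apply pow2_ge_0. }
  assert (s2 : r * r = (qx - cx) ^ 2 + (qy - cy) ^ 2).
  { rewrite <- e2. apply sqrt_sqrt. apply Rplus_le_le_0_compat; apply pow2_ge_0. }
  assert (s3 : r * r = (sx - cx) ^ 2 + (sy - cy) ^ 2).
  { rewrite <- e3. apply sqrt_sqrt. apply Rplus_le_le_0_compat; apply pow2_ge_0. }
  assert (h1 : 2 * (mx * ux + my * uy) = ux ^ 2 + uy ^ 2).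
  { unfold mx, my, ux, uy. nra. }
  assert (h2 : 2 * (mx * wx + my * wy) = wx ^ 2 + wy ^ 2).
  { unfold mx, my, wx, wy. nra. }
  pose proof (circ_id _ _ _ _ _ _ h1 h2) as K.
  assert (rr : r * r = mx ^ 2 + my ^ 2) by (rewrite s1; unfold mx, my; ring).
  set (a := sqrt ((px - qx) ^ 2 + (py - qy) ^ 2)).
  set (b := sqrt ((qx - sx) ^ 2 + (qy - sy) ^ 2)).
  set (c := sqrt (wx ^ 2 + wy ^ 2)).
  assert (a0 : 0 <= a) by apply sqrt_pos.
  assert (b0 : 0 <= b) by apply sqrt_pos.
  assert (c0 : 0 <= c) by apply sqrt_pos.
  assert (aa : a * a = ux ^ 2 + uy ^ 2).
  { unfold a. rewrite sqrt_sqrt by (apply Rplus_le_le_0_compat; apply pow2_ge_0). unfold ux, uy. ring. }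
  assert (bb : b * b = (ux - wx) ^ 2 + (uy - wy) ^ 2).
  { unfold b. rewrite sqrt_sqrt by (apply Rplus_le_le_0_compat; apply pow2_ge_0). unfold ux, uy, wx, wy. ring. }
  assert (cc : c * c = wx ^ 2 + wy ^ 2).
  { unfold c. rewrite sqrt_sqrt by (apply Rplus_le_le_0_compat; apply pow2_ge_0). ring. }
  set (cr := ux * wy - uy * wx) in *.
  assert (crA : A0 <= Rabs cr) by lra.
  assert (cr2 : A0 * A0 <= cr ^ 2).
  { rewrite <- pow2_abs. pose proof (Rabs_pos cr). nra. }
  assert (prod2 : (a * b * c) ^ 2 = 4 * (r * r) * cr ^ 2).
  { rewrite rr, K. replace ((a * b * c) ^ 2) with ((a * a) * (b * b) * (c * c)) by ring.
    rewrite aa, bb, cc. ring. }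
  assert (abc : 2 * (A0 * R0) <= a * b * c).
  { assert (4 * (R0 * R0) * (A0 * A0) <= (a * b * c) ^ 2).
    { rewrite prod2. assert (R0 * R0 <= r * r) by nra. nra. }
    assert (0 <= a * b * c) by (apply Rmult_le_pos; [apply Rmult_le_pos|]; lra).
    nra. }
  assert (tri : c <= a + b).
  { pose proof (sqrt_cauchy ux uy (wx - ux) (wy - uy)) as CS.
    unfold Rsqr in CS.
    assert (ea : sqrt (ux * ux + uy * uy) = a).
    { unfold a. f_equal. unfold ux, uy. ring. }
    assert (eb : sqrt ((wx - ux) * (wx - ux) + (wy - uy) * (wy - uy)) = b).
    { unfold b. f_equal. unfold ux, uy, wx, wy. ring. }
    rewrite ea, eb in CS.
    assert (c * c <= (a + b) * (a + b)) by nra.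
    nra. }
  assert (ab0 : 0 <= a * b) by (apply Rmult_le_pos; lra).
  assert (s1' : a * b * c <= a * b * (a + b)) by (apply Rmult_le_compat_l; lra).
  assert (s2' : 4 * (a * b) <= (a + b) ^ 2) by (pose proof (pow2_ge_0 (a - b)); lra).
  assert (s3' : 4 * (a * b) * (a + b) <= (a + b) ^ 2 * (a + b)) by (apply Rmult_le_compat_r; lra).
  replace ((a + b) ^ 3) with ((a + b) ^ 2 * (a + b)) by ring.
  lra.
Qed.

Lemma cube_mono s k : 0 <= s -> 0 < k -> 8 * k ^ 3 <= s ^ 3 -> 2 * k <= s.
Proof.
  intros hs hk h. destruct (Rle_or_lt (2 * k) s) as [l|l]; auto.
  exfalso.
  assert (q1 : s * s <= (2 * k) * (2 * k)) by (apply Rmult_le_compat; lra).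
  assert (q2 : s * (s * s) <= s * ((2 * k) * (2 * k))) by (apply Rmult_le_compat_l; lra).
  assert (q3 : s * ((2 * k) * (2 * k)) < (2 * k) * ((2 * k) * (2 * k))).
  { apply Rmult_lt_compat_r; [|lra]. apply Rmult_lt_0_compat; lra. }
  replace (s ^ 3) with (s * (s * s)) in h by ring.
  replace (8 * k ^ 3) with ((2 * k) * ((2 * k) * (2 * k))) in h by ring.
  lra.
Qed.

Fixpoint Dsum (d : nat -> R) (n : nat) : R :=
  match n with O => 0 | S n => Dsum d n + d (S n) end.

Lemma dist2_pos P Q : P <> Q -> 0 < dist2 P Q.
Proof.
  destruct P as [px py], Q as [qx qy]. intros H. unfold dist2; cbn [fst snd].
  apply sqrt_lt_R0.
  destruct (Req_dec px qx) as [e|e]; destruct (Req_dec py qy) as [e'|e'].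
  - subst. congruence.
  - assert (0 < (py - qy)²) by (apply Rsqr_pos_lt; lra). unfold Rsqr in *.
    pose proof (pow2_ge_0 (px - qx)). simpl; lra.
  - assert (0 < (px - qx)²) by (apply Rsqr_pos_lt; lra). unfold Rsqr in *.
    pose proof (pow2_ge_0 (py - qy)). simpl; lra.
  - assert (0 < (px - qx)²) by (apply Rsqr_pos_lt; lra). unfold Rsqr in *.
    pose proof (pow2_ge_0 (py - qy)). simpl; lra.
Qed.

Theorem theorem3p3
  (x y x' y' : R -> R) (a b : R)
  (HC : immersed_curve x y x' y' a b)
  (N : nat) (t : nat -> R)
  (Ht_in : forall j, (1 <= j <= N)%nat -> a <= t j <= b)
  (Ht_ord : forall j, (1 <= j < N)%nat -> t j < t (S j))
  (Hdist : forall i j, (1 <= i)%nat -> (i < j)%nat -> (j <= N)%nat ->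
              (x (t i), y (t i)) <> (x (t j), y (t j)))
  (A0 R0 : R) (HA0 : 0 < A0) (HR0 : 0 < R0)
  (Harea : forall j, (1 <= j)%nat -> (j + 2 <= N)%nat ->
     A0 / 2 <= tri_area (x (t j), y (t j)) (x (t (j+1)%nat), y (t (j+1)%nat))
                        (x (t (j+2)%nat), y (t (j+2)%nat)))
  (Hcirc : forall j, (1 <= j)%nat -> (j + 2 <= N)%nat ->
     exists r, R0 <= r /\
       on_circle_of_radius (x (t j), y (t j)) (x (t (j+1)%nat), y (t (j+1)%nat))
                           (x (t (j+2)%nat), y (t (j+2)%nat)) r) :
  INR N < 2 + curve_length x' y' a b / Rpower (A0 * R0) (1/3).
Proof.
  set (k := Rpower (A0 * R0) (1/3)).
  assert (kpos : 0 < k) by (unfold k, Rpower; apply exp_pos).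
  assert (k3 : k ^ 3 = A0 * R0).
  { rewrite <- Rpower_pow by exact kpos. unfold k. rewrite Rpower_mult.
    replace (1 / 3 * INR 3) with 1 by (simpl; field). apply Rpower_1.
    apply Rmult_lt_0_compat; lra. }
  set (d := fun j => dist2 (x (t j), y (t j)) (x (t (S j)), y (t (S j)))).
  assert (dge : forall j, 0 <= d j) by (intros; unfold d, dist2; apply sqrt_pos).
  assert (pair : forall j, (1 <= j)%nat -> (j + 2 <= N)%nat -> 2 * k <= d j + d (S j)).
  { intros j h1 h2. destruct (Hcirc j h1 h2) as [r [hr hc]].
    pose proof (tri_key _ _ _ _ _ _ HA0 HR0 hr hc (Harea j h1 h2)) as T.
    apply cube_mono.
    - pose proof (dge j); pose proof (dge (S j)); lra.
    - exact kpos.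
    - rewrite k3. unfold d.
      replace (S (S j)) with (j + 2)%nat by lia.
      replace (S j) with (j + 1)%nat by lia. exact T. }
  assert (claim1 : forall m, (m + 2 <= N)%nat ->
            2 * INR m * k <= 2 * Dsum d (m + 1) - d 1%nat - d (m + 1)%nat).
  { induction m as [|m IH]; intros hm.
    - simpl. lra.
    - assert (IH' := IH ltac:(lia)).
      assert (P := pair (m + 1)%nat ltac:(lia) ltac:(lia)).
      replace (S m + 1)%nat with (S (m + 1)) by lia. simpl Dsum.
      rewrite S_INR. lra. }
  set (s := speed x' y').
  assert (mono : forall j, (1 <= j <= N)%nat -> t 1%nat <= t j).
  { induction j as [|j IH]; intros hj. { lia. }
    destruct (Nat.eq_dec j 0) as [->|nj]. { lra. }
    assert (IH' := IH ltac:(lia)). pose proof (Ht_ord j ltac:(lia)). lra. }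
  assert (claim2 : forall n, (S n <= N)%nat -> Dsum d n <= RInt s (t 1%nat) (t (S n))).
  { induction n as [|n IH]; intros hn.
    - simpl. rewrite RInt_point. apply Rle_refl.
    - assert (IH' := IH ltac:(lia)).
      assert (o := Ht_ord (S n) ltac:(lia)).
      assert (m1 := mono (S n) ltac:(lia)).
      assert (i1 := Ht_in 1%nat ltac:(lia)).
      assert (i2 := Ht_in (S (S n)) ltac:(lia)).
      assert (ch := chord _ _ _ _ _ _ HC (t (S n)) (t (S (S n))) ltac:(lra) ltac:(lra) ltac:(lra)).
      assert (e1 := speed_ex _ _ _ _ _ _ HC (t 1%nat) (t (S n)) ltac:(lra) ltac:(lra) ltac:(lra)).
      assert (e2 := speed_ex _ _ _ _ _ _ HC (t (S n)) (t (S (S n))) ltac:(lra) ltac:(lra) ltac:(lra)).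
      assert (C := RInt_Chasles s _ _ _ e1 e2).
      simpl Dsum. unfold plus in C; simpl in C. rewrite <- C.
      unfold d at 2. fold s in ch. lra. }
  assert (hab : a < b) by (destruct HC; auto).
  assert (L0 : 0 <= RInt s a b).
  { apply RInt_ge_0; [lra| |intros; apply speed_ge0].
    apply (speed_ex _ _ _ _ _ _ HC); lra. }
  unfold curve_length. fold (speed x' y'). fold s. fold k.
  destruct (le_lt_dec N 1) as [hN|hN].
  - assert (INR N <= 1) by (apply (le_INR N 1) in hN; simpl in hN; lra).
    assert (0 <= RInt s a b / k) by (apply Rdiv_le_0_compat; lra). lra.
  - assert (c1 := claim1 (N - 2)%nat ltac:(lia)).
    replace (N - 2 + 1)%nat with (S (N - 2)) in c1 by lia.
    assert (c2 := claim2 (S (N - 2)) ltac:(lia)).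
    replace (S (S (N - 2))) with N in c2 by lia.
    assert (d1 : 0 < d 1%nat).
    { unfold d. apply dist2_pos. apply Hdist; lia. }
    pose proof (dge (S (N - 2))).
    assert (m1 := mono N ltac:(lia)).
    assert (i1 := Ht_in 1%nat ltac:(lia)).
    assert (iN := Ht_in N ltac:(lia)).
    assert (e1 := speed_ex _ _ _ _ _ _ HC a (t 1%nat) ltac:(lra) ltac:(lra) ltac:(lra)).
    assert (e2 := speed_ex _ _ _ _ _ _ HC (t 1%nat) (t N) ltac:(lra) ltac:(lra) ltac:(lra)).
    assert (e3 := speed_ex _ _ _ _ _ _ HC (t N) b ltac:(lra) ltac:(lra) ltac:(lra)).
    assert (g1 : 0 <= RInt s a (t 1%nat)) by (apply RInt_ge_0; [lra|exact e1|intros; apply speed_ge0]).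
    assert (g3 : 0 <= RInt s (t N) b) by (apply RInt_ge_0; [lra|exact e3|intros; apply speed_ge0]).
    assert (C1 := RInt_Chasles s _ _ _ e1 e2).
    assert (e12 := ex_RInt_Chasles s _ _ _ e1 e2).
    assert (C2 := RInt_Chasles s _ _ _ e12 e3).
    unfold plus in C1, C2; simpl in C1, C2.
    assert (Lb : RInt s (t 1%nat) (t N) <= RInt s a b) by lra.
    rewrite minus_INR in c1 by lia. simpl (INR 2) in c1.
    assert (key : (INR N - 2) * k < RInt s a b) by lra.
    assert (INR N - 2 < RInt s a b / k).
    { apply (Rmult_lt_reg_r k); auto. unfold Rdiv. rewrite Rmult_assoc, Rinv_l by lra. lra. }
    lra.
Qed.
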